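(* Let $T$ be a complete dependent (NIP) first-order theory with monster model $\mathfrak{C}$. For $\ell<2$ let $\mathcal{D}_\ell$ be a proper filter on a set $I_\ell$, $m(\ell)<\omega$, and $\bar a_{\ell,t}\in {}^{m(\ell)}\mathfrak{C}$ for $t \in I_\ell$. Let $C\subseteq\mathfrak{C}$ and $\Delta$ be a set of formulas, both finite. Then there are $\mathcal{S}_0 \in \mathcal{D}_0^+$, $\mathcal{S}_1\in\mathcal{D}^+_1$ and a type $q$ such that $(\forall^{\mathcal{D}_0} s_0\in\mathcal{S}_0)(\forall^{\mathcal{D}_1} s_1\in \mathcal{S}_1)\,[q = \mathrm{tp}_\Delta(\bar a_{0,s_0}{}^\frown\bar a_{1,s_1}, C)]$.
   Context: For a filter $\mathcal{D}$ on $I$, $\mathcal{D}^+$ is the set of subsets of $I$ meeting every member of $\mathcal{D}$; for $\mathcal{S}\in\mathcal{D}^+$, ''$(\forall^{\mathcal{D}} s\in\mathcal{S})\,\phi(s)$'' means $\{s\in\mathcal{S}:\phi(s)\}$ belongs to the filter generated by $\mathcal{D}\cup\{\mathcal{S}\}$. $\mathrm{tp}_\Delta(\bar a, C)$ is the set of formulas $\varphi(\bar x,\bar c)^{\mathbf t}$ with $\varphi\in\Delta$, $\bar c$ from $C$, $\mathbf t$ a truth value, satisfied by $\bar a$. *)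

(* Defs.v *)
From Stdlib Require Import List Arith.
From Stdlib Require Vectors.Fin.
Import ListNotations.
Set Implicit Arguments.

Record signature := {
  Fn : Type;            (* function symbols (constants = arity 0) *)
  fn_ar : Fn -> nat;
  Rl : Type;
  rl_ar : Rl -> nat }.

Inductive term (L : signature) : Type :=
  | var : nat -> term L
  | app : forall f : Fn L, (Fin.t (fn_ar L f) -> term L) -> term L.

Inductive formula (L : signature) : Type :=
  | Feq : term L -> term L -> formula L
  | Frel : forall r : Rl L, (Fin.t (rl_ar L r) -> term L) -> formula L
  | Fneg : formula L -> formula L
  | Fand : formula L -> formula L -> formula L
  | Fex : nat -> formula L -> formula L.

Record structure (L : signature) := {
  dom :> Type;
  ifn : forall f : Fn L, (Fin.t (fn_ar L f) -> dom) -> dom;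
  irl : forall r : Rl L, (Fin.t (rl_ar L r) -> dom) -> Prop }.

Section Sem.
Variables (L : signature) (M : structure L).

Fixpoint eval (e : nat -> M) (t : term L) : M :=
  match t with
  | var _ x => e x
  | app f args => ifn M f (fun i => eval e (args i))
  end.

Definition upd (e : nat -> M) (x : nat) (a : M) : nat -> M :=
  fun y => if Nat.eqb y x then a else e y.

Fixpoint sat (e : nat -> M) (phi : formula L) : Prop :=
  match phi with
  | Feq t u => eval e t = eval e u
  | Frel r args => irl M r (fun i => eval e (args i))
  | Fneg p => ~ sat e p
  | Fand p q => sat e p /\ sat e q
  | Fex x p => exists a : M, sat (upd e x a) p
  end.

(** [ov l e]: the assignment sending variable i to l_i for i < length l,
    and to e i otherwise (substituting a tuple into the first variables). *)
Definition ov (l : list M) (e : nat -> M) : nat -> M := fun i => nth i l (e i).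

Fixpoint occurs (x : nat) (t : term L) : Prop :=
  match t with
  | var _ y => x = y
  | app f args => exists i, occurs x (args i)
  end.

Fixpoint free (x : nat) (phi : formula L) : Prop :=
  match phi with
  | Feq t u => occurs x t \/ occurs x u
  | Frel r args => exists i, occurs x (args i)
  | Fneg p => free x p
  | Fand p q => free x p \/ free x q
  | Fex y p => x <> y /\ free x p
  end.

(** Dependence (NIP): no partitioned formula phi(xbar; ybar) (|xbar| = m at
    variables 0..m-1, |ybar| = k at variables m..m+k-1, remaining free
    variables as parameters given by e) has the independence property, i.e.
    for each such phi there is n such that no n tuples are shattered. *)
Definition NIP : Prop :=
  forall (phi : formula L) (m k : nat) (e : nat -> M),
  exists n : nat,
    ~ (exists a : nat -> list M,
         (forall i, length (a i) = m) /\
         forall J : nat -> bool,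
         exists b : list M, length b = k /\
           forall i, i < n -> (sat (ov (a i ++ b) e) phi <-> J i = true)).

(** tp_Delta(abar, C): a set of triples ((phi,k), cbar, t), read as the
    formula phi(xbar, cbar)^t, where (phi,k) in Delta means phi = phi(xbar, ybar)
    with |ybar| = k, cbar a k-tuple from C, t a truth value, and abar satisfies
    phi(xbar,cbar)^t. *)
Definition tp (Delta : list (formula L * nat)) (C : list M) (abar : list M)
    (p : (formula L * nat) * list M * bool) : Prop :=
  match p with
  | (phik, c, t) =>
      In phik Delta /\ length c = snd phik /\ (forall c0, In c0 c -> In c0 C) /\
      forall e : nat -> M, (sat (ov (abar ++ c) e) (fst phik) <-> t = true)
  end.

End Sem.

Section Filters.
Variable I : Type.

Definition proper_filter (D : (I -> Prop) -> Prop) : Prop :=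
  D (fun _ => True) /\
  (forall X Y, D X -> (forall i, X i -> Y i) -> D Y) /\
  (forall X Y, D X -> D Y -> D (fun i => X i /\ Y i)) /\
  ~ D (fun _ => False).

Definition positive (D : (I -> Prop) -> Prop) (S : I -> Prop) : Prop :=
  forall X, D X -> exists i, X i /\ S i.

Definition gen_filter (F : (I -> Prop) -> Prop) (Y : I -> Prop) : Prop :=
  exists Ls : list (I -> Prop),
    (forall X, In X Ls -> F X) /\ forall i, (forall X, In X Ls -> X i) -> Y i.

(** (forall^D s in S) P s  :=  {s in S | P s} belongs to the filter generated by D u {S} *)
Definition forall_filter (D : (I -> Prop) -> Prop) (S : I -> Prop) (P : I -> Prop) : Prop :=
  gen_filter (fun X => D X \/ (forall i, X i <-> S i)) (fun s => S s /\ P s).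

End Filters.

(* Main.v *)
Require Import Defs.
From Stdlib Require Import List Arith.
From Stdlib Require Import Classical FunctionalExtensionality Lia.
Import ListNotations.

Definition incl' {A} (S T : A -> Prop) := forall x, S x -> T x.

Definition good {I0 I1 : Type} (D0 : (I0 -> Prop) -> Prop) (D1 : (I1 -> Prop) -> Prop)
  (R : I0 -> I1 -> Prop) (b : Prop) (S0 : I0 -> Prop) (S1 : I1 -> Prop) :=
  exists X0, D0 X0 /\ forall s0, X0 s0 -> S0 s0 ->
    exists Y, D1 Y /\ forall s1, Y s1 -> S1 s1 -> (R s0 s1 <-> b).

Definition NIPrel {I0 I1 : Type} (R : I0 -> I1 -> Prop) :=
  exists n, ~ exists s : nat -> I0, forall J : nat -> bool,
    exists s1, forall i, i < n -> (R (s i) s1 <-> J i = true).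

Lemma pos_mono {I} (D : (I -> Prop) -> Prop) S S' :
  positive D S -> incl' S S' -> positive D S'.
Proof.
  intros P H X HX. destruct (P X HX) as [i [? ?]]. exists i; auto.
Qed.

Lemma pos_True {I} (D : (I -> Prop) -> Prop) : proper_filter D -> positive D (fun _ => True).
Proof.
  intros (DT & Dm & Di & Dp) X HX. apply NNPP; intro N. apply Dp.
  apply (Dm X); auto. intros i Xi. apply N. exists i; auto.
Qed.

Lemma not_pos_ex {I} (D : (I -> Prop) -> Prop) S :
  ~ positive D S -> exists X, D X /\ forall i, X i -> ~ S i.
Proof.
  intros N. apply NNPP; intro N2. apply N. intros X HX. apply NNPP; intro N3.
  apply N2. exists X. split; auto. intros i Xi Si. apply N3; exists i; auto.
Qed.

Lemma filter_list {I} (D : (I -> Prop) -> Prop) (HD : proper_filter D) {A} (l : list A)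
  (Q : A -> I -> Prop) :
  (forall a, In a l -> exists X, D X /\ forall i, X i -> Q a i) ->
  exists X, D X /\ forall a, In a l -> forall i, X i -> Q a i.
Proof.
  destruct HD as (DT & Dm & Di & Dp).
  induction l as [|a l IH]; intros H.
  - exists (fun _ => True). split; auto. intros a [].
  - destruct (H a (or_introl eq_refl)) as [Xa [HXa HXa']].
    destruct IH as [X [HX HX']]. { intros b Hb. apply H. right; auto. }
    exists (fun i => Xa i /\ X i). split. apply Di; auto.
    intros b [<-|Hb] i [? ?]; auto.
Qed.

Fixpoint all_bl (n : nat) : list (list bool) :=
  match n with
  | 0 => [[]]
  | S n => map (cons true) (all_bl n) ++ map (cons false) (all_bl n)
  end.

Lemma in_all_bl J : In J (all_bl (length J)).
Proof.
  induction J as [|a J IH]; simpl; auto.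
  apply in_or_app. destruct a; [left|right]; apply in_map; auto.
Qed.

Lemma core {I0 I1 : Type} (D0 : (I0 -> Prop) -> Prop) (D1 : (I1 -> Prop) -> Prop)
  (HD0 : proper_filter D0) (HD1 : proper_filter D1) (R : I0 -> I1 -> Prop)
  (HR : NIPrel R) T0 T1 (HT0 : positive D0 T0) (HT1 : positive D1 T1) :
  exists S0 S1 b, incl' S0 T0 /\ incl' S1 T1 /\ positive D0 S0 /\ positive D1 S1 /\
    good D0 D1 R b S0 S1.
Proof.
  apply NNPP; intro H.
  destruct HD0 as (D0T & D0m & D0i & D0p).
  destruct HD1 as (D1T & D1m & D1i & D1p).
  assert (split: forall S1, incl' S1 T1 -> positive D1 S1 -> exists X, D0 X /\
    forall s0, X s0 -> T0 s0 -> positive D1 (fun s1 => S1 s1 /\ R s0 s1) /\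
                               positive D1 (fun s1 => S1 s1 /\ ~ R s0 s1)).
  { intros S1 HS1 PS1.
    set (A1 := fun s0 => T0 s0 /\ exists Y, D1 Y /\ forall s1, Y s1 -> S1 s1 -> R s0 s1).
    set (A2 := fun s0 => T0 s0 /\ exists Y, D1 Y /\ forall s1, Y s1 -> S1 s1 -> ~ R s0 s1).
    assert (N1 : ~ positive D0 A1).
    { intro P. apply H. exists A1, S1, True.
      split. { intros x [? _]; auto. } split; auto. split; auto. split; auto.
      exists (fun _ => True). split; auto. intros s0 _ [_ [Y [HY HYR]]].
      exists Y; split; auto. intros s1 Ys Ss; split; auto. }
    assert (N2 : ~ positive D0 A2).
    { intro P. apply H. exists A2, S1, False.
      split. { intros x [? _]; auto. } split; auto. split; auto. split; auto.
      exists (fun _ => True). split; auto. intros s0 _ [_ [Y [HY HYR]]].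
      exists Y; split; auto. intros s1 Ys Ss; split; [apply HYR; auto|contradiction]. }
    destruct (not_pos_ex _ _ N1) as [X1 [HX1 HX1']].
    destruct (not_pos_ex _ _ N2) as [X2 [HX2 HX2']].
    exists (fun i => X1 i /\ X2 i). split. apply D0i; auto.
    intros s0 [x1 x2] Ts0. split.
    - intros Y HY. apply NNPP; intro C. apply (HX2' s0 x2). split; auto.
      exists Y; split; auto. intros s1 Ys Ss Rs. apply C. exists s1; auto.
    - intros Y HY. apply NNPP; intro C. apply (HX1' s0 x1). split; auto.
      exists Y. split; auto. intros s1 Ys Ss. apply NNPP; intro nR. apply C; exists s1; auto. }
  set (node := fun (s : nat -> I0) (J : list bool) (s1 : I1) =>
         T1 s1 /\ forall i, i < length J -> (R (s i) s1 <-> nth i J false = true)).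
  assert (claim : forall n, exists s : nat -> I0, forall J, length J = n -> positive D1 (node s J)).
  { induction n as [|n IHn].
    - destruct (HT0 _ D0T) as [i0 _]. exists (fun _ => i0). intros J HJ.
      destruct J; [|discriminate]. eapply pos_mono; [exact HT1|].
      intros x Hx; split; auto; intros i Hi; simpl in Hi; lia.
    - destruct IHn as [s Hs].
      assert (HX : exists X, D0 X /\ forall J, In J (all_bl n) -> forall s0, X s0 ->
        (T0 s0 -> positive D1 (fun s1 => node s J s1 /\ R s0 s1) /\
                  positive D1 (fun s1 => node s J s1 /\ ~ R s0 s1))).
      { apply filter_list. repeat split; auto. intros J HJ. apply split.
        - intros x [Hx _]; auto.
        - apply Hs. clear -HJ. revert J HJ. induction n; simpl; intros J HJ.
          + destruct HJ as [<-|[]]; auto.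
          + apply in_app_or in HJ. destruct HJ as [HJ|HJ];
            apply in_map_iff in HJ; destruct HJ as [J' [<- HJ']]; simpl; f_equal; auto. }
      destruct HX as [X [HX HXJ]]. destruct (HT0 X HX) as [s0 [Xs0 Ts0]].
      exists (fun i => match i with 0 => s0 | S i => s i end).
      intros J HJ. destruct J as [|b J]; [discriminate|]. simpl in HJ; injection HJ as HJ.
      assert (HJin : In J (all_bl n)) by (rewrite <- HJ; apply in_all_bl).
      destruct (HXJ J HJin s0 Xs0 Ts0) as [P1 P2].
      destruct b.
      + eapply pos_mono; [exact P1|]. intros s1 [[T Hn] Rr]. split; auto.
        intros i Hi. destruct i; simpl. { split; auto. }
        apply Hn. simpl in Hi; lia.
      + eapply pos_mono; [exact P2|]. intros s1 [[T Hn] Rr]. split; auto.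
        intros i Hi. destruct i; simpl. { split; intro; [contradiction|discriminate]. }
        apply Hn. simpl in Hi; lia. }
  destruct HR as [n Hn]. apply Hn. destruct (claim n) as [s Hs]. exists s. intros J.
  assert (HL : length (map J (seq 0 n)) = n) by (rewrite length_map, length_seq; auto).
  destruct (Hs _ HL (fun _ => True) D1T) as [s1 [_ [_ Hnd]]].
  exists s1. intros i Hi. rewrite HL in Hnd. rewrite (Hnd i Hi).
  rewrite (nth_indep _ false (J 0)) by lia.
  rewrite map_nth, seq_nth by lia. simpl. reflexivity.
Qed.

Lemma listlem {I0 I1 : Type} (D0 : (I0 -> Prop) -> Prop) (D1 : (I1 -> Prop) -> Prop)
  (HD0 : proper_filter D0) (HD1 : proper_filter D1) (Rs : list (I0 -> I1 -> Prop))
  (HRs : forall R, In R Rs -> NIPrel R) :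
  forall T0 T1, positive D0 T0 -> positive D1 T1 ->
  exists S0 S1 (Bs : list Prop) X0, positive D0 S0 /\ positive D1 S1 /\
    incl' S0 T0 /\ incl' S1 T1 /\ D0 X0 /\
    forall s0, X0 s0 -> S0 s0 -> exists Y, D1 Y /\ forall s1, Y s1 -> S1 s1 ->
      Forall2 (fun R B => R s0 s1 <-> B) Rs Bs.
Proof.
  induction Rs as [|R Rs IH]; intros T0 T1 P0 P1.
  - exists T0, T1, [], (fun _ => True).
    destruct HD0 as (D0T & _). destruct HD1 as (D1T & _).
    split; auto. split; auto. split. { intros x Hx; auto. }
    split. { intros x Hx; auto. } split; auto.
    intros s0 _ _. exists (fun _ => True). split; auto.
  - destruct (core D0 D1 HD0 HD1 R (HRs R (or_introl eq_refl)) T0 T1 P0 P1)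
      as [S0' [S1' [b [i0 [i1 [P0' [P1' [X0' [HX0' G]]]]]]]]].
    destruct (IH (fun R' H => HRs R' (or_intror H)) S0' S1' P0' P1')
      as [S0 [S1 [Bs [X0 [Q0 [Q1 [j0 [j1 [HX0 G2]]]]]]]]].
    exists S0, S1, (b :: Bs), (fun i => X0 i /\ X0' i).
    destruct HD0 as (D0T & D0m & D0i & D0p). destruct HD1 as (D1T & D1m & D1i & D1p).
    split; auto. split; auto. split. { intros x Hx; auto. }
    split. { intros x Hx; auto. } split. { apply D0i; auto. }
    intros s0 [x0 x0'] Ss0.
    destruct (G2 s0 x0 Ss0) as [Y [HY HY']].
    destruct (G s0 x0' (j0 s0 Ss0)) as [Y' [HY2 HY2']].
    exists (fun i => Y i /\ Y' i). split. { apply D1i; auto. }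
    intros s1 [y y'] Ss1. constructor; auto.
Qed.

Lemma F2agree {A} (P Q : A -> Prop) (l : list A) (Bs : list Prop) :
  Forall2 (fun a B => P a <-> B) l Bs -> Forall2 (fun a B => Q a <-> B) l Bs ->
  forall a, In a l -> (P a <-> Q a).
Proof.
  intros F1; induction F1 as [|x B l Bs Hx F1 IH]; intros F2 a Ha; [destruct Ha|].
  inversion F2; subst. destruct Ha as [<-|Ha].
  - rewrite Hx. symmetry. auto.
  - apply IH; auto.
Qed.

Fixpoint tuples {A} (C : list A) (n : nat) : list (list A) :=
  match n with
  | 0 => [[]]
  | S n => flat_map (fun x => map (cons x) (tuples C n)) C
  end.

Lemma tuples_in {A} (C : list A) : forall c, (forall x, In x c -> In x C) ->
  In c (tuples C (length c)).
Proof.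
  induction c as [|a c IH]; simpl; intros H; auto.
  apply in_flat_map. exists a. split; auto. apply in_map. apply IH; auto.
Qed.

Lemma tuples_len {A} (C : list A) : forall n c, In c (tuples C n) -> length c = n.
Proof.
  induction n; simpl; intros c H.
  - destruct H as [<-|[]]; auto.
  - apply in_flat_map in H as [x [_ H]]. apply in_map_iff in H as [c' [<- H]].
    simpl; f_equal; auto.
Qed.

Lemma eval_coinc {L : signature} {M : structure L} (t : term L) :
  forall e e', (forall x, occurs x t -> e x = e' x) -> eval M e t = eval M e' t.
Proof.
  induction t as [x|f args IH]; simpl; intros e e' H.
  - apply H; reflexivity.
  - f_equal. extensionality i. apply IH. intros x Hx. apply H. exists i; auto.
Qed.

Lemma sat_coinc {L : signature} {M : structure L} (phi : formula L) :
  forall e e', (forall x, free x phi -> e x = e' x) -> (sat M e phi <-> sat M e' phi).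
Proof.
  induction phi as [t u|r args|p IH|p IH1 q IH2|n p IH]; simpl; intros e e' H.
  - rewrite (eval_coinc t e e'), (eval_coinc u e e'); [reflexivity| |];
      intros; apply H; auto.
  - assert (E : (fun i => eval M e (args i)) = (fun i => eval M e' (args i))).
    { extensionality i. apply eval_coinc. intros x Hx. apply H. exists i; auto. }
    rewrite E. reflexivity.
  - rewrite (IH e e' H). reflexivity.
  - rewrite (IH1 e e'), (IH2 e e'); [reflexivity| |]; intros; apply H; auto.
  - assert (H' : forall a x, free x p -> upd M e n a x = upd M e' n a x).
    { intros a x Hx. unfold upd. destruct (Nat.eqb x n) eqn:E; auto.
      apply H. split; auto. apply Nat.eqb_neq; auto. }
    split; intros [a Ha]; exists a.
    + apply (IH (upd M e n a) (upd M e' n a) (H' a)); auto.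
    + apply (IH (upd M e n a) (upd M e' n a) (H' a)); auto.
Qed.

Lemma ov_coinc {L : signature} {M : structure L} (phi : formula L) (l : list M) e e' :
  (forall x, free x phi -> x < length l) ->
  (sat M (ov M l e) phi <-> sat M (ov M l e') phi).
Proof.
  intros B. apply sat_coinc. intros x Hx. unfold ov. apply nth_indep; auto.
Qed.

Lemma transfer {L : signature} {M : structure L} (phi : formula L) (l l' : list M) (T : Prop) :
  (forall x, free x phi -> x < length l) -> (forall x, free x phi -> x < length l') ->
  ((forall e, sat M (ov M l e) phi) <-> (forall e, sat M (ov M l' e) phi)) ->
  (forall e, sat M (ov M l e) phi <-> T) -> (forall e, sat M (ov M l' e) phi <-> T).
Proof.
  intros Bl Bl' Heq H e. split; intro Hs.
  - apply (H e). apply (proj2 Heq). intros e'. apply (ov_coinc phi l' e e' Bl'); auto.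
  - apply (H e) in Hs.
    assert (A : forall e', sat M (ov M l e') phi) by
      (intros e'; apply (ov_coinc phi l e e' Bl); auto).
    apply (proj1 Heq A e).
Qed.

Theorem claim8p1 (L : signature) (M : structure L) (HNIP : NIP M)
  (I0 I1 : Type) (D0 : (I0 -> Prop) -> Prop) (D1 : (I1 -> Prop) -> Prop)
  (HD0 : proper_filter D0) (HD1 : proper_filter D1)
  (m0 m1 : nat) (a0 : I0 -> list (dom M)) (a1 : I1 -> list (dom M))
  (Ha0 : forall t, length (a0 t) = m0) (Ha1 : forall t, length (a1 t) = m1)
  (C : list (dom M)) (Delta : list (formula L * nat))
  (HDelta : forall phi k, In (phi, k) Delta ->
              forall x, free x phi -> x < m0 + m1 + k) :
  exists (S0 : I0 -> Prop) (S1 : I1 -> Prop)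
         (q : (formula L * nat) * list (dom M) * bool -> Prop),
    positive D0 S0 /\ positive D1 S1 /\
    forall_filter D0 S0 (fun s0 =>
      forall_filter D1 S1 (fun s1 =>
        forall p, q p <-> tp M Delta C (a0 s0 ++ a1 s1) p)).
Proof.
  set (rel := fun (pc : (formula L * nat) * list (dom M)) (s0 : I0) (s1 : I1) =>
         forall e, sat M (ov M ((a0 s0 ++ a1 s1) ++ snd pc) e) (fst (fst pc))).
  set (pairs := flat_map (fun phik => map (fun c => (phik, c)) (tuples C (snd phik))) Delta).
  set (Rs := map rel pairs).
  assert (HRs : forall R, In R Rs -> NIPrel R).
  { intros R HR. apply in_map_iff in HR as [[[phi k] c] [<- Hin]].
    apply in_flat_map in Hin as [[phi' k'] [HD Hc]].
    apply in_map_iff in Hc as [c' [Heq Hc']]. injection Heq as -> -> ->.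
    apply tuples_len in Hc'. simpl in Hc'.
    destruct (classic (exists e0 : nat -> dom M, True)) as [[e0 _]|Ne].
    - destruct (HNIP phi m0 (m1 + length c) e0) as [n Hn]. exists n. intros [s Hs].
      apply Hn. exists (fun i => a0 (s i)). split; [auto|]. intros J.
      destruct (Hs J) as [s1 Hs1]. exists (a1 s1 ++ c). split.
      { rewrite length_app, Ha1; auto. }
      intros i Hi. rewrite <- (Hs1 i Hi). unfold rel; simpl. rewrite app_assoc.
      assert (B : forall x, free x phi -> x < length ((a0 (s i) ++ a1 s1) ++ c)).
      { rewrite !length_app, Ha0, Ha1, Hc'. apply (HDelta phi k HD). }
      split; intro H.
      + intros e. apply (ov_coinc phi _ e0 e B); auto.
      + apply H.
    - exists 1. intros [s Hs]. destruct (Hs (fun _ => false)) as [s1 Hs1].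
      assert (HH : rel (phi, k, c) (s 0) s1) by (intros e; exfalso; apply Ne; exists e; auto).
      apply (Hs1 0) in HH; [discriminate|lia]. }
  destruct (listlem D0 D1 HD0 HD1 Rs HRs _ _ (pos_True D0 HD0) (pos_True D1 HD1))
    as [S0 [S1 [Bs [X0 [P0 [P1 [_ [_ [HX0 Hgood]]]]]]]]].
  destruct (P0 X0 HX0) as [u0 [Xu0 Su0]].
  destruct (Hgood u0 Xu0 Su0) as [Yu [HYu HYu']].
  destruct (P1 Yu HYu) as [u1 [Yu1 Su1]].
  pose proof (HYu' u1 Yu1 Su1) as Fu.
  exists S0, S1, (tp M Delta C (a0 u0 ++ a1 u1)).
  split; auto. split; auto.
  exists [X0; S0]. split.
  { intros X [<-|[<-|[]]]; [left; auto | right; tauto]. }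
  intros s0 Hall. assert (Xs : X0 s0) by (apply Hall; simpl; auto).
  assert (Ss : S0 s0) by (apply Hall; simpl; auto). split; auto.
  destruct (Hgood s0 Xs Ss) as [Y [HY HY']].
  exists [Y; S1]. split.
  { intros X [<-|[<-|[]]]; [left; auto | right; tauto]. }
  intros s1 Hall1. assert (Ys : Y s1) by (apply Hall1; simpl; auto).
  assert (Ss1 : S1 s1) by (apply Hall1; simpl; auto). split; auto.
  pose proof (HY' s1 Ys Ss1) as Fs.
  pose proof (F2agree (fun R => R u0 u1) (fun R => R s0 s1) Rs Bs Fu Fs) as Ag.
  intros [[[phi k] c] t]. simpl.
  assert (key : In (phi, k) Delta -> length c = k -> (forall c0, In c0 c -> In c0 C) ->
     (rel (phi, k, c) u0 u1 <-> rel (phi, k, c) s0 s1)).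
  { intros H1 H2 H3. apply (Ag (rel (phi, k, c))). apply in_map.
    apply in_flat_map. exists (phi, k). split; auto. apply in_map. simpl.
    rewrite <- H2. apply tuples_in; auto. }
  assert (Bd : forall v0 v1, In (phi, k) Delta -> length c = k ->
     forall x, free x phi -> x < length ((a0 v0 ++ a1 v1) ++ c)).
  { intros v0 v1 H1 H2. rewrite !length_app, Ha0, Ha1, H2. apply (HDelta phi k H1). }
  split; intros (H1 & H2 & H3 & H4); split; auto; split; auto; split; auto.
  - apply (transfer phi ((a0 u0 ++ a1 u1) ++ c)); auto; try (apply key; auto).
  - apply (transfer phi ((a0 s0 ++ a1 s1) ++ c)); auto; try (symmetry; apply key; auto).
Qed.
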